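(* Let $E$ be a real non-zero essential matrix and let $(R_a, R_b)$ be its twisted pair of rotations. Suppose that for some $\tau \in [-1,3]$, $$\frac{1}{2}(\tau^2 - 1)\operatorname{tr}(EE^{\mathrm T}) + (\tau + 1)\operatorname{tr}(E^2) - \tau\,(\operatorname{tr} E)^2 = 0.$$ Then $\tau = \operatorname{tr} R_a$ or $\tau = \operatorname{tr} R_b$.
   Context: For a 3-vector $a$, $[a]_\times$ denotes the $3\times 3$ skew-symmetric matrix with $[a]_\times b = a\times b$ for every $b$. An essential matrix is a matrix of the form $E = [t]_\times R$ with $R\in\mathrm{SO}(3)$ and $t\in\mathbb{R}^3$. For a real non-zero essential matrix $E$, the twisted pair of rotations is the pair $R_a, R_b \in \mathrm{SO}(3)$ defined as follows. Write $E = [t]_\times R_a$ with $t \neq 0$, and set $R_b = \left(\frac{2tt^{\mathrm T}}{\|t\|^2} - I\right) R_a$. Then $E \sim [t]_\times R_b$, where $\sim$ denotes equality up to a non-zero scalar factor. Moreover, $R_a$ and $R_b$ are exactly the rotations $R$ for which $E \sim [t']_\times R$ for some $t'\in\mathbb{R}^3$. *)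

(* Defs.v *)
(* Real numbers are modelled by an arbitrary real closed field. *)
From HB Require Import structures.
From mathcomp Require Import all_boot all_order all_algebra.
Set Implicit Arguments. Unset Strict Implicit. Unset Printing Implicit Defensive.
Import Order.TTheory GRing.Theory Num.Theory.
Local Open Scope ring_scope.

Section Defs.
Variable R : rcfType.

Definition v3 (a : 'cV[R]_3) (k : nat) : R := a (inord k) 0.

(* [a]_x : the skew-symmetric matrix with [a]_x b = a \times b *)
Definition skew (a : 'cV[R]_3) : 'M[R]_3 :=
  \matrix_(i < 3, j < 3)
    match nat_of_ord i, nat_of_ord j with
    | 0, 1 => - v3 a 2 | 0, 2 => v3 a 1
    | 1, 0 => v3 a 2   | 1, 2 => - v3 a 0
    | 2, 0 => - v3 a 1 | 2, 1 => v3 a 0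
    | _, _ => 0
    end.

Definition is_rot (Q : 'M[R]_3) : Prop := Q^T *m Q = 1%:M /\ \det Q = 1.

Definition sqnorm (t : 'cV[R]_3) : R := (t^T *m t) 0 0.

Definition twisted_pair (E Ra Rb : 'M[R]_3) : Prop :=
  exists t : 'cV[R]_3,
    [/\ t != 0, is_rot Ra, E = skew t *m Ra &
        Rb = ((2 / sqnorm t) *: (t *m t^T) - 1%:M) *m Ra].
End Defs.

(* Main.v *)
Require Import Defs.
From HB Require Import structures.
From mathcomp Require Import all_boot all_order all_algebra.
From mathcomp Require Import ring lra zify.
Import Order.TTheory GRing.Theory Num.Theory.
Local Open Scope ring_scope.

Section H.
Variable R : rcfType.

Lemma sum3 (F : 'I_3 -> R) : \sum_(i < 3) F i = F (inord 0) + F (inord 1) + F (inord 2).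
Proof.
rewrite !big_ord_recr big_ord0 /= add0r.
have e0 : (widen_ord (leqnSn 2) (widen_ord (leqnSn 1) ord_max)) = inord 0 :> 'I_3.
  by apply: val_inj; rewrite /= inordK.
have e1 : (widen_ord (leqnSn 2) ord_max) = inord 1 :> 'I_3.
  by apply: val_inj; rewrite /= inordK.
have e2 : (ord_max : 'I_3) = inord 2 :> 'I_3.
  by apply: val_inj; rewrite /= inordK.
by rewrite e0 e1 e2.
Qed.

Lemma mul3E (A B : 'M[R]_3) i j :
  (A *m B) (inord i) (inord j) =
  A (inord i) (inord 0) * B (inord 0) (inord j) +
  A (inord i) (inord 1) * B (inord 1) (inord j) +
  A (inord i) (inord 2) * B (inord 2) (inord j).
Proof. by rewrite mxE sum3. Qed.

Lemma tr3E (A : 'M[R]_3) :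
  \tr A = A (inord 0) (inord 0) + A (inord 1) (inord 1) + A (inord 2) (inord 2).
Proof. by rewrite /mxtrace sum3. Qed.

Lemma trmx3E (A : 'M[R]_3) i j : A^T (inord i) (inord j) = A (inord j) (inord i).
Proof. by rewrite mxE. Qed.

Definition skf (t : 'cV[R]_3) (i j : nat) : R :=
    match i, j with
    | 0, 1 => - v3 t 2 | 0, 2 => v3 t 1
    | 1, 0 => v3 t 2   | 1, 2 => - v3 t 0
    | 2, 0 => - v3 t 1 | 2, 1 => v3 t 0
    | _, _ => 0
    end.

Lemma skewE (t : 'cV[R]_3) i j : (i < 3)%N -> (j < 3)%N -> Defs.skew t (inord i) (inord j) = skf t i j.
Proof. by move=> hi hj; rewrite mxE !inordK. Qed.

Lemma one3E i j : (i < 3)%N -> (j < 3)%N ->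
  (1%:M : 'M[R]_3) (inord i) (inord j) = (i == j)%:R.
Proof.
move=> hi hj; rewrite mxE -(inj_eq val_inj) /= !inordK //.
Qed.

Lemma inord3_eq i j : (i < 3)%N -> (j < 3)%N -> (inord i == inord j :> 'I_3) = (i == j).
Proof. by move=> hi hj; rewrite -(inj_eq val_inj) /= !inordK. Qed.
Lemma o1 : (ord0 : 'I_1) = 0. Proof. by []. Qed.

Lemma det2 (B : 'M[R]_2) : \det B =
  B (inord 0) (inord 0) * B (inord 1) (inord 1) - B (inord 0) (inord 1) * B (inord 1) (inord 0).
Proof.
rewrite (expand_det_row B ord0) big_ord_recl big_ord1 /cofactor !det_mx11 !mxE /=.
have f3 : (lift (lift ord0 ord0) (0:'I_1) : 'I_2) = inord 0 by apply: val_inj; rewrite /= inordK.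
have f1 : (lift ord0 (0:'I_1) : 'I_2) = inord 1 by apply: val_inj; rewrite /= inordK.
have f2 : (lift ord0 (ord0:'I_1) : 'I_2) = inord 1 by apply: val_inj; rewrite /= inordK.
have f0 : (ord0 : 'I_2) = inord 0 by apply: val_inj; rewrite /= inordK.
rewrite f3 ?f1 ?f2 f0 /=. ring.
Qed.

Lemma liftI i k : (i < 3)%N -> (k < 2)%N ->
  lift (inord i : 'I_3) (inord k : 'I_2) = inord (bump i k).
Proof.
move=> hi hk; apply: val_inj; rewrite /= !inordK //.
by rewrite /bump; case: (i <= k)%N => /=; lia.
Qed.
Lemma cof3E (A : 'M[R]_3) i j : (i<3)%N -> (j<3)%N -> cofactor A (inord i) (inord j) =
  (-1)^+(i+j) * (A (inord (bump i 0)) (inord (bump j 0)) * A (inord (bump i 1)) (inord (bump j 1))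
   - A (inord (bump i 0)) (inord (bump j 1)) * A (inord (bump i 1)) (inord (bump j 0))).
Proof. by move=> hi hj; rewrite /cofactor det2 !mxE !liftI // !inordK. Qed.
Lemma key (tau t0 t1 t2 r00 r01 r02 r10 r11 r12 r20 r21 r22 X1 X2 X3 Y : R) :
  (-1) ^+ 0 * (r11 * r22 - r12 * r21) = r00 ->
  (-1) ^+ 1 * (r10 * r22 - r12 * r20) = r01 ->
  (-1) ^+ 2 * (r10 * r21 - r11 * r20) = r02 ->
  (-1) ^+ 1 * (r01 * r22 - r02 * r21) = r10 ->
  (-1) ^+ 2 * (r00 * r22 - r02 * r20) = r11 ->
  (-1) ^+ 3 * (r00 * r21 - r01 * r20) = r12 ->
  (-1) ^+ 2 * (r01 * r12 - r02 * r11) = r20 ->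
  (-1) ^+ 3 * (r00 * r12 - r02 * r10) = r21 ->
  (-1) ^+ 4 * (r00 * r11 - r01 * r10) = r22 ->
  r00 * r00 + r10 * r10 + r20 * r20 = 1 ->
  r00 * r01 + r10 * r11 + r20 * r21 = 0 ->
  r00 * r02 + r10 * r12 + r20 * r22 = 0 ->
  r01 * r01 + r11 * r11 + r21 * r21 = 1 ->
  r01 * r02 + r11 * r12 + r21 * r22 = 0 ->
  r02 * r02 + r12 * r12 + r22 * r22 = 1 ->
  r00 * r00 + r01 * r01 + r02 * r02 = 1 ->
  r00 * r10 + r01 * r11 + r02 * r12 = 0 ->
  r00 * r20 + r01 * r21 + r02 * r22 = 0 ->
  r10 * r10 + r11 * r11 + r12 * r12 = 1 ->
  r10 * r20 + r11 * r21 + r12 * r22 = 0 ->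
  r20 * r20 + r21 * r21 + r22 * r22 = 1 ->
  ~ (t0 = 0 /\ t1 = 0 /\ t2 = 0) ->
  X1 = (0 * r00 + (- t2) * r10 + t1 * r20) * (0 * r00 + (- t2) * r10 + t1 * r20) + (0 * r01 + (- t2) * r11 + t1 * r21) * (0 * r01 + (- t2) * r11 + t1 * r21) + (0 * r02 + (- t2) * r12 + t1 * r22) * (0 * r02 + (- t2) * r12 + t1 * r22) + (t2 * r00 + 0 * r10 + (- t0) * r20) * (t2 * r00 + 0 * r10 + (- t0) * r20) + (t2 * r01 + 0 * r11 + (- t0) * r21) * (t2 * r01 + 0 * r11 + (- t0) * r21) + (t2 * r02 + 0 * r12 + (- t0) * r22) * (t2 * r02 + 0 * r12 + (- t0) * r22) + ((- t1) * r00 + t0 * r10 + 0 * r20) * ((- t1) * r00 + t0 * r10 + 0 * r20) + ((- t1) * r01 + t0 * r11 + 0 * r21) * ((- t1) * r01 + t0 * r11 + 0 * r21) + ((- t1) * r02 + t0 * r12 + 0 * r22) * ((- t1) * r02 + t0 * r12 + 0 * r22) ->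
  X2 = (0 * r00 + (- t2) * r10 + t1 * r20) * (0 * r00 + (- t2) * r10 + t1 * r20) + (0 * r01 + (- t2) * r11 + t1 * r21) * (t2 * r00 + 0 * r10 + (- t0) * r20) + (0 * r02 + (- t2) * r12 + t1 * r22) * ((- t1) * r00 + t0 * r10 + 0 * r20) + (t2 * r00 + 0 * r10 + (- t0) * r20) * (0 * r01 + (- t2) * r11 + t1 * r21) + (t2 * r01 + 0 * r11 + (- t0) * r21) * (t2 * r01 + 0 * r11 + (- t0) * r21) + (t2 * r02 + 0 * r12 + (- t0) * r22) * ((- t1) * r01 + t0 * r11 + 0 * r21) + ((- t1) * r00 + t0 * r10 + 0 * r20) * (0 * r02 + (- t2) * r12 + t1 * r22) + ((- t1) * r01 + t0 * r11 + 0 * r21) * (t2 * r02 + 0 * r12 + (- t0) * r22) + ((- t1) * r02 + t0 * r12 + 0 * r22) * ((- t1) * r02 + t0 * r12 + 0 * r22) ->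
  X3 = (0 * r00 + (- t2) * r10 + t1 * r20) + (t2 * r01 + 0 * r11 + (- t0) * r21) + ((- t1) * r02 + t0 * r12 + 0 * r22) ->
  Y = (2 / (t0 * t0 + t1 * t1 + t2 * t2) * (t0 * t0) - 1) * r00 + (2 / (t0 * t0 + t1 * t1 + t2 * t2) * (t0 * t1) - 0) * r10 + (2 / (t0 * t0 + t1 * t1 + t2 * t2) * (t0 * t2) - 0) * r20 + (2 / (t0 * t0 + t1 * t1 + t2 * t2) * (t1 * t0) - 0) * r01 + (2 / (t0 * t0 + t1 * t1 + t2 * t2) * (t1 * t1) - 1) * r11 + (2 / (t0 * t0 + t1 * t1 + t2 * t2) * (t1 * t2) - 0) * r21 + (2 / (t0 * t0 + t1 * t1 + t2 * t2) * (t2 * t0) - 0) * r02 + (2 / (t0 * t0 + t1 * t1 + t2 * t2) * (t2 * t1) - 0) * r12 + (2 / (t0 * t0 + t1 * t1 + t2 * t2) * (t2 * t2) - 1) * r22 ->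
  2^-1 * (tau ^+ 2 - 1) * X1 + (tau + 1) * X2 - tau * X3 ^+ 2 = 0 ->
  tau = r00 + r11 + r22 \/ tau = Y.
Proof.
move=> C_00 C_01 C_02 C_10 C_11 C_12 C_20 C_21 C_22 O1_00 O1_01 O1_02 O1_11 O1_12 O1_22 O2_00 O2_01 O2_02 O2_11 O2_12 O2_22 tnz hX1 hX2 hX3 hY Hp.
have C_00' : (-1) ^+ 0 * (r11 * r22 - r12 * r21) - r00 = 0 by rewrite C_00 subrr.
have C_01' : (-1) ^+ 1 * (r10 * r22 - r12 * r20) - r01 = 0 by rewrite C_01 subrr.
have C_02' : (-1) ^+ 2 * (r10 * r21 - r11 * r20) - r02 = 0 by rewrite C_02 subrr.
have C_10' : (-1) ^+ 1 * (r01 * r22 - r02 * r21) - r10 = 0 by rewrite C_10 subrr.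
have C_11' : (-1) ^+ 2 * (r00 * r22 - r02 * r20) - r11 = 0 by rewrite C_11 subrr.
have C_12' : (-1) ^+ 3 * (r00 * r21 - r01 * r20) - r12 = 0 by rewrite C_12 subrr.
have C_20' : (-1) ^+ 2 * (r01 * r12 - r02 * r11) - r20 = 0 by rewrite C_20 subrr.
have C_21' : (-1) ^+ 3 * (r00 * r12 - r02 * r10) - r21 = 0 by rewrite C_21 subrr.
have C_22' : (-1) ^+ 4 * (r00 * r11 - r01 * r10) - r22 = 0 by rewrite C_22 subrr.
have O1_00' : r00 * r00 + r10 * r10 + r20 * r20 - 1 = 0 by rewrite O1_00 subrr.
have O1_01' : r00 * r01 + r10 * r11 + r20 * r21 - 0 = 0 by rewrite O1_01 subrr.
have O1_02' : r00 * r02 + r10 * r12 + r20 * r22 - 0 = 0 by rewrite O1_02 subrr.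
have O1_11' : r01 * r01 + r11 * r11 + r21 * r21 - 1 = 0 by rewrite O1_11 subrr.
have O1_12' : r01 * r02 + r11 * r12 + r21 * r22 - 0 = 0 by rewrite O1_12 subrr.
have O1_22' : r02 * r02 + r12 * r12 + r22 * r22 - 1 = 0 by rewrite O1_22 subrr.
have O2_00' : r00 * r00 + r01 * r01 + r02 * r02 - 1 = 0 by rewrite O2_00 subrr.
have O2_01' : r00 * r10 + r01 * r11 + r02 * r12 - 0 = 0 by rewrite O2_01 subrr.
have O2_02' : r00 * r20 + r01 * r21 + r02 * r22 - 0 = 0 by rewrite O2_02 subrr.
have O2_11' : r10 * r10 + r11 * r11 + r12 * r12 - 1 = 0 by rewrite O2_11 subrr.
have O2_12' : r10 * r20 + r11 * r21 + r12 * r22 - 0 = 0 by rewrite O2_12 subrr.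
have O2_22' : r20 * r20 + r21 * r21 + r22 * r22 - 1 = 0 by rewrite O2_22 subrr.
have P1 : X1 = 2 * (t0 * t0 + t1 * t1 + t2 * t2).
  apply: subr0_eq; rewrite ?hX1 ?hX2 ?hX3.
  transitivity (((1) * (t2 * t2) * (r10 * r10 + r11 * r11 + r12 * r12 - 1) + (1) * (t2 * t2) * (r00 * r00 + r01 * r01 + r02 * r02 - 1) + (-2) * (t1 * t2) * (r10 * r20 + r11 * r21 + r12 * r22 - 0) + (-1) * (t1 * t1) * (r10 * r10 + r11 * r11 + r12 * r12 - 1) + (1) * (t1 * t1) * (r01 * r01 + r11 * r11 + r21 * r21 - 1) + (1) * (t1 * t1) * (r02 * r02 + r12 * r12 + r22 * r22 - 1) + (1) * (t1 * t1) * (r00 * r00 + r10 * r10 + r20 * r20 - 1) + (-2) * (t0 * t2) * (r00 * r20 + r01 * r21 + r02 * r22 - 0) + (-1) * (t0 * t0) * (r00 * r00 + r01 * r01 + r02 * r02 - 1) + (1) * (t0 * t0) * (r01 * r01 + r11 * r11 + r21 * r21 - 1) + (1) * (t0 * t0) * (r02 * r02 + r12 * r12 + r22 * r22 - 1) + (1) * (t0 * t0) * (r00 * r00 + r10 * r10 + r20 * r20 - 1) + (-2) * (t0 * t1) * (r00 * r10 + r01 * r11 + r02 * r12 - 0)) : R); first by ring.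
  by rewrite O1_00' O1_11' O1_22' O2_00' O2_01' O2_02' O2_11' O2_12'; ring.
have P2 : X2 - (t0 * t0 + t1 * t1 + t2 * t2) = (r00 + r11 + r22) * (2 * (t0 * r00 * t0 + t0 * r01 * t1 + t0 * r02 * t2 + t1 * r10 * t0 + t1 * r11 * t1 + t1 * r12 * t2 + t2 * r20 * t0 + t2 * r21 * t1 + t2 * r22 * t2) - (r00 + r11 + r22) * (t0 * t0 + t1 * t1 + t2 * t2)).
  apply: subr0_eq; rewrite ?hX1 ?hX2 ?hX3.
  transitivity (((1) * (t2 * t2) * (r10 * r10 + r11 * r11 + r12 * r12 - 1) + (1) * (t2 * t2) * (r00 * r00 + r01 * r01 + r02 * r02 - 1) + (-1) * (t2 * t2) * (r02 * r02 + r12 * r12 + r22 * r22 - 1) + (-2) * (t1 * t2) * (r10 * r20 + r11 * r21 + r12 * r22 - 0) + (-2) * (t1 * t2) * (r01 * r02 + r11 * r12 + r21 * r22 - 0) + (-1) * (t1 * t1) * (r10 * r10 + r11 * r11 + r12 * r12 - 1) + (1) * (t1 * t1) * (r02 * r02 + r12 * r12 + r22 * r22 - 1) + (1) * (t1 * t1) * (r00 * r00 + r10 * r10 + r20 * r20 - 1) + (-2) * (t0 * t1) * (r00 * r10 + r01 * r11 + r02 * r12 - 0) + (-2) * (t0 * t1) * (r00 * r01 + r10 * r11 + r20 * r21 - 0) + (-2) * (t0 * t2) * (r00 * r20 + r01 * r21 + r02 * r22 - 0) + (-2) * (t0 * t2) * (r00 * r02 + r10 * r12 + r20 * r22 - 0)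 + (-1) * (t0 * t0) * (r00 * r00 + r01 * r01 + r02 * r02 - 1) + (1) * (t0 * t0) * (r01 * r01 + r11 * r11 + r21 * r21 - 1) + (1) * (t0 * t0) * (r02 * r02 + r12 * r12 + r22 * r22 - 1)) : R); first by ring.
  by rewrite O1_00' O1_01' O1_02' O1_11' O1_12' O1_22' O2_00' O2_01' O2_02' O2_11' O2_12'; ring.
have P3 : X2 - X3 ^+ 2 = - (2 * (t0 * r00 * t0 + t0 * r01 * t1 + t0 * r02 * t2 + t1 * r10 * t0 + t1 * r11 * t1 + t1 * r12 * t2 + t2 * r20 * t0 + t2 * r21 * t1 + t2 * r22 * t2)).
  apply: subr0_eq; rewrite ?hX1 ?hX2 ?hX3.
  transitivity (((-2) * (t2 * t2) * ((-1) ^+ 4 * (r00 * r11 - r01 * r10) - r22) + (-2) * (t0 * t2) * ((-1) ^+ 2 * (r10 * r21 - r11 * r20) - r02) + (-2) * (t0 * t2) * ((-1) ^+ 2 * (r01 * r12 - r02 * r11) - r20) + (-2) * (t1 * t2) * ((-1) ^+ 3 * (r00 * r21 - r01 * r20) - r12) + (-2) * (t1 * t2) * ((-1) ^+ 3 * (r00 * r12 - r02 * r10) - r21) + (-2) * (t1 * t1) * ((-1) ^+ 2 * (r00 * r22 - r02 * r20) - r11) + (-2) * (t0 * t1) * ((-1) ^+ 1 * (r01 * r22 - r02 * r21) - r10) + (-2) * (t0 * t1) * ((-1) ^+ 1 * (r10 * r22 - r12 * r20) - r01) + (-2) * (t0 * t0) * ((-1) ^+ 0 * (r11 * r22 - r12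 * r21) - r00)) : R); first by ring.
  by rewrite C_00' C_01' C_02' C_10' C_11' C_12' C_20' C_21' C_22'; ring.
have nz : (t0 * t0 + t1 * t1 + t2 * t2) != 0.
  apply/negP => /eqP h; apply: tnz; clear -h; split; [|split]; nra.
have e : (tau - (r00 + r11 + r22)) * ((t0 * t0 + t1 * t1 + t2 * t2) * tau - 2 * (t0 * r00 * t0 + t0 * r01 * t1 + t0 * r02 * t2 + t1 * r10 * t0 + t1 * r11 * t1 + t1 * r12 * t2 + t2 * r20 * t0 + t2 * r21 * t1 + t2 * r22 * t2) + (t0 * t0 + t1 * t1 + t2 * t2) * (r00 + r11 + r22)) = 0.
  rewrite -[RHS]Hp.
  have P2' : X2 = (t0 * t0 + t1 * t1 + t2 * t2) + (r00 + r11 + r22) * (2 * (t0 * r00 * t0 + t0 * r01 * t1 + t0 * r02 * t2 + t1 * r10 * t0 + t1 * r11 * t1 + t1 * r12 * t2 + t2 * r20 * t0 + t2 * r21 * t1 + t2 * r22 * t2) - (r00 + r11 + r22) * (t0 * t0 + t1 * t1 + t2 * t2)) by rewrite -P2; ring.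
  have P3' : X3 ^+ 2 = X2 + 2 * (t0 * r00 * t0 + t0 * r01 * t1 + t0 * r02 * t2 + t1 * r10 * t0 + t1 * r11 * t1 + t1 * r12 * t2 + t2 * r20 * t0 + t2 * r21 * t1 + t2 * r22 * t2) by rewrite -[X2](subrK (X3 ^+ 2)) P3; ring.
  by rewrite P3' P2' P1; field.
move/eqP: e; rewrite mulf_eq0 => /orP [/eqP e|/eqP e].
  by left; apply/eqP; rewrite -subr_eq0 e.
have etau : (t0 * t0 + t1 * t1 + t2 * t2) * tau = 2 * (t0 * r00 * t0 + t0 * r01 * t1 + t0 * r02 * t2 + t1 * r10 * t0 + t1 * r11 * t1 + t1 * r12 * t2 + t2 * r20 * t0 + t2 * r21 * t1 + t2 * r22 * t2) - (t0 * t0 + t1 * t1 + t2 * t2) * (r00 + r11 + r22).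
  by apply/eqP; rewrite -subr_eq0 -e; apply/eqP; ring.
right; rewrite hY; apply: (mulfI nz); rewrite /= etau; field; exact: nz.
Qed.
End H.

Lemma bridge (R : rcfType) (x y u v : R) : x = y -> u - v = x - y -> u = v.
Proof. by move=> h e; apply: subr0_eq; rewrite e h subrr. Qed.

Theorem proposition2 (R : rcfType) (E Ra Rb : 'M[R]_3) (tau : R) :
  E != 0 -> twisted_pair E Ra Rb ->
  -1 <= tau <= 3 ->
  2^-1 * (tau ^+ 2 - 1) * \tr (E *m E^T) + (tau + 1) * \tr (E *m E)
    - tau * (\tr E) ^+ 2 = 0 ->
  tau = \tr Ra \/ tau = \tr Rb.
Proof.
move=> _ [t [tn0 [RaRa detRa] -> ->]] _ Hp.
have RRt : Ra *m Ra^T = 1%:M by apply: mulmx1C.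
have adjE : \adj Ra = Ra^T.
  by rewrite -[\adj Ra]mul1mx -RaRa -mulmxA mul_mx_adj detRa mulmx1.
rewrite tr3E.
apply: (@key R tau (t (inord 0) 0) (t (inord 1) 0) (t (inord 2) 0)
  (Ra (inord 0) (inord 0)) (Ra (inord 0) (inord 1)) (Ra (inord 0) (inord 2))
  (Ra (inord 1) (inord 0)) (Ra (inord 1) (inord 1)) (Ra (inord 1) (inord 2))
  (Ra (inord 2) (inord 0)) (Ra (inord 2) (inord 1)) (Ra (inord 2) (inord 2))
  _ _ _ _ _ _ _ _ _ _ _ _ _ _ _ _ _ _ _ _ _ _ _ _ _ _ _ _ _ _ Hp).
- apply: (@bridge R _ _ _ _ (congr1 (fun M : 'M[R]_3 => M (inord 0) (inord 0)) adjE)).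
  by rewrite /= !mxE cof3E //=; ring.
- apply: (@bridge R _ _ _ _ (congr1 (fun M : 'M[R]_3 => M (inord 1) (inord 0)) adjE)).
  by rewrite /= !mxE cof3E //=; ring.
- apply: (@bridge R _ _ _ _ (congr1 (fun M : 'M[R]_3 => M (inord 2) (inord 0)) adjE)).
  by rewrite /= !mxE cof3E //=; ring.
- apply: (@bridge R _ _ _ _ (congr1 (fun M : 'M[R]_3 => M (inord 0) (inord 1)) adjE)).
  by rewrite /= !mxE cof3E //=; ring.
- apply: (@bridge R _ _ _ _ (congr1 (fun M : 'M[R]_3 => M (inord 1) (inord 1)) adjE)).
  by rewrite /= !mxE cof3E //=; ring.
- apply: (@bridge R _ _ _ _ (congr1 (fun M : 'M[R]_3 => M (inord 2) (inord 1)) adjE)).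
  by rewrite /= !mxE cof3E //=; ring.
- apply: (@bridge R _ _ _ _ (congr1 (fun M : 'M[R]_3 => M (inord 0) (inord 2)) adjE)).
  by rewrite /= !mxE cof3E //=; ring.
- apply: (@bridge R _ _ _ _ (congr1 (fun M : 'M[R]_3 => M (inord 1) (inord 2)) adjE)).
  by rewrite /= !mxE cof3E //=; ring.
- apply: (@bridge R _ _ _ _ (congr1 (fun M : 'M[R]_3 => M (inord 2) (inord 2)) adjE)).
  by rewrite /= !mxE cof3E //=; ring.
- apply: (@bridge R _ _ _ _ (congr1 (fun M : 'M[R]_3 => M (inord 0) (inord 0)) RaRa)).
  by rewrite /= mul3E !trmx3E one3E //=; ring.
- apply: (@bridge R _ _ _ _ (congr1 (fun M : 'M[R]_3 => M (inord 0) (inord 1)) RaRa)).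
  by rewrite /= mul3E !trmx3E one3E //=; ring.
- apply: (@bridge R _ _ _ _ (congr1 (fun M : 'M[R]_3 => M (inord 0) (inord 2)) RaRa)).
  by rewrite /= mul3E !trmx3E one3E //=; ring.
- apply: (@bridge R _ _ _ _ (congr1 (fun M : 'M[R]_3 => M (inord 1) (inord 1)) RaRa)).
  by rewrite /= mul3E !trmx3E one3E //=; ring.
- apply: (@bridge R _ _ _ _ (congr1 (fun M : 'M[R]_3 => M (inord 1) (inord 2)) RaRa)).
  by rewrite /= mul3E !trmx3E one3E //=; ring.
- apply: (@bridge R _ _ _ _ (congr1 (fun M : 'M[R]_3 => M (inord 2) (inord 2)) RaRa)).
  by rewrite /= mul3E !trmx3E one3E //=; ring.
- apply: (@bridge R _ _ _ _ (congr1 (fun M : 'M[R]_3 => M (inord 0) (inord 0)) RRt)).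
  by rewrite /= mul3E !trmx3E one3E //=; ring.
- apply: (@bridge R _ _ _ _ (congr1 (fun M : 'M[R]_3 => M (inord 0) (inord 1)) RRt)).
  by rewrite /= mul3E !trmx3E one3E //=; ring.
- apply: (@bridge R _ _ _ _ (congr1 (fun M : 'M[R]_3 => M (inord 0) (inord 2)) RRt)).
  by rewrite /= mul3E !trmx3E one3E //=; ring.
- apply: (@bridge R _ _ _ _ (congr1 (fun M : 'M[R]_3 => M (inord 1) (inord 1)) RRt)).
  by rewrite /= mul3E !trmx3E one3E //=; ring.
- apply: (@bridge R _ _ _ _ (congr1 (fun M : 'M[R]_3 => M (inord 1) (inord 2)) RRt)).
  by rewrite /= mul3E !trmx3E one3E //=; ring.
- apply: (@bridge R _ _ _ _ (congr1 (fun M : 'M[R]_3 => M (inord 2) (inord 2)) RRt)).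
  by rewrite /= mul3E !trmx3E one3E //=; ring.
- move=> [h0 [h1 h2]]; apply: (negP tn0); apply/eqP/matrixP => i j.
  rewrite !mxE [j]ord1 -o1.
  case: i => [[|[|[|k]]] hk] //; [rewrite -h0|rewrite -h1|rewrite -h2];
    by congr (t _ _); apply: val_inj; rewrite /= inordK.
- by rewrite !(tr3E, mul3E, trmx3E) !skewE // /skf /v3; ring.
- by rewrite !(tr3E, mul3E, trmx3E) !skewE // /skf /v3; ring.
- by rewrite !(tr3E, mul3E, trmx3E) !skewE // /skf /v3; ring.
- by rewrite /sqnorm !(tr3E, mul3E) !mxE !big_ord1 !mxE sum3 !mxE !inord3_eq //= ?o1; ring.
Qed.
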